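(* Let $\beta$ be an ordered partition of $N$ and let $\zeta\in(\mathfrak t')^*_\beta$ be $\beta$-generic with $\zeta(c)\neq0$. Then (i) the map $W\to(\mathfrak t')^*$, $w\mapsto w(\zeta)$ (affine action) is injective; (ii) the map $X^\beta\to(\mathfrak t')^*/\bar W$, $x\mapsto\bar W\cdot x(\zeta)$, is injective. (Analogously, if $\zeta\in\bar{\mathfrak t}^*_\beta$ is $\beta$-generic, then $w\mapsto w(\zeta)$ is injective on $\bar W$.)
   Context: Fix an integer $N\ge2$. Let $\bar{\mathfrak t}=\bigoplus_{i=1}^N\mathbb C\epsilon_i^\vee$, $\mathfrak t'=\bar{\mathfrak t}\oplus\mathbb Cc$, $\epsilon_1,\dots,\epsilon_N\in\bar{\mathfrak t}^*$ the dual basis, and $(\mathfrak t')^*=\bar{\mathfrak t}^*\oplus\mathbb Cc^*$ with $\epsilon_i(c)=0$, $c^*(c)=1$, $c^*(\bar{\mathfrak t})=0$. Put $(\epsilon_i,\epsilon_j)=\delta_{ij}$ and for $\zeta\in(\mathfrak t')^*$, $\bar\alpha=\sum a_i\epsilon_i$, $(\zeta,\bar\alpha)=\sum_ia_i\zeta(\epsilon_i^\vee)$. $\bar R=\{\alpha_{ij}=\epsilon_i-\epsilon_j:i\ne j\}$, $\bar R_+=\{\alpha_{ij}:i<j\}$, $\alpha_i=\alpha_{i,i+1}$, $\bar\Pi=\{\alpha_1,\dots,\alpha_{N-1}\}$. With formal $\delta$, $R=\{\bar\alpha+k\delta:\bar\alpha\in\bar R,k\in\mathbb Z\}$, $R_+=\{\bar\alpha+k\delta:\bar\alpha\in\bar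 R_+,k\ge0\}\cup\{-\bar\alpha+k\delta:\bar\alpha\in\bar R_+,k>0\}$, $R_-=R\setminus R_+$; $(\zeta,\bar\alpha+k\delta)=(\zeta,\bar\alpha)+k\zeta(c)$. $\bar P=\bigoplus\mathbb Z\epsilon_i$, $\bar P_-=\{\eta\in\bar P:(\eta,\alpha)\le0\ \forall\alpha\in\bar R_+\}$, $\bar W=\mathfrak S_N$ permuting indices, $W=\bar W\ltimes\bar P$ (elements $wt_\eta$, $wt_\eta w^{-1}=t_{w(\eta)}$), acting on $R$ by $w(\bar\alpha+k\delta)=w(\bar\alpha)+k\delta$, $t_\eta(\bar\alpha+k\delta)=\bar\alpha+(k-(\eta,\bar\alpha))\delta$, and on $(\mathfrak t')^*$ by the affine action: $w$ permutes the $\epsilon_i$ and fixes $c^*$, $t_\eta(\zeta)=\zeta+\zeta(c)\eta$. $l(w)=\#(R_+\cap w^{-1}(R_-))$. An ordered partition $\beta$ of $N$ gives blocks of consecutive indices of sizes $\beta_1,\dots,\beta_r$; $\bar R_\beta=\{\alpha_{ij}:i,j\text{ in the same block}\}$, $\bar R_{\beta,+}=\bar R_\beta\cap\bar R_+$, $\bar\Pi_\beta=\bar\Pi\cap\bar R_\beta$, $\bar W_\beta=\langle s_\alpha:\alpha\in\bar\Pi_\beta\rangle$, $W^\beta=\{w\in W:l(wu)\ge l(w)\ \forall u\in\bar W_\beta\}$, $\bar W^\beta=W^\beta\cap\bar W$. $(\mathfrak t')^*_\beta=\{\zeta\in(\mathfrak t')^*:(\zeta,\alpha)=-1\ \forall\alpha\in\bar\Pi_\beta\}$,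 $\bar{\mathfrak t}^*_\beta$ analogously in $\bar{\mathfrak t}^*$. $\zeta\in(\mathfrak t')^*_\beta$ (resp. $\bar{\mathfrak t}^*_\beta$) is $\beta$-generic if $(\zeta,\alpha)\notin\{1,0,-1\}$ for all $\alpha\in R_+\setminus\bar R_{\beta,+}$ (resp. $\bar R_+\setminus\bar R_{\beta,+}$). For $w\in\bar W^\beta$, $\eta_w\in\bar P_-$ is defined by $(\eta_w,\epsilon_1)=0$ and $(\eta_w,\alpha_i)=-1$ if $\alpha_i\in w(\bar R_+\setminus\bar R_{\beta,+})$, $0$ otherwise; $\bar P_-(w)=\{\eta+\eta_w:\eta\in\bar P_-\}$; $X^\beta=\{t_\eta w:w\in\bar W^\beta,\eta\in\bar P_-(w)\}$. *)

(* Defs.v *)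
From HB Require Import structures.
From mathcomp Require Import all_boot all_order all_algebra all_fingroup.
From mathcomp Require complex.
From mathcomp Require Import Rstruct.
Set Implicit Arguments.
Unset Strict Implicit.
Unset Printing Implicit Defensive.
Import Order.TTheory GRing.Theory Num.Theory.

Local Open Scope ring_scope.

Module CCdef.
Import complex.
Definition CC : numClosedFieldType := complex.complex Rdefinitions.R.
End CCdef.
Definition CC : numClosedFieldType := CCdef.CC.

(* Weights.  zeta in (t')^* is encoded by the pair (z, kappa) where
   z i = zeta(eps_i^vee) = (zeta, eps_i)  and  kappa = zeta(c).
   Elements of bar t^* are encoded by z alone (zeta(c) = 0 there).
   Elements of bar P = (+)_i Z eps_i are encoded by their coordinates. *)
Definition tdual (N : nat) : Type := ({ffun 'I_N -> CC} * CC)%type.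
Definition Pbar (N : nat) : Type := {ffun 'I_N -> int}.

(* bar W = S_N acting by w(eps_i) = eps_(w i).  Hence the coefficient of
   eps_j in w(zeta) is the coefficient of eps_(w^-1 j) in zeta.        *)
Definition pactb (N : nat) (w : {perm 'I_N}) (z : {ffun 'I_N -> CC})
  : {ffun 'I_N -> CC} := [ffun j => z ((w^-1)%g j)].
Definition pact (N : nat) (w : {perm 'I_N}) (z : tdual N) : tdual N :=
  (pactb w z.1, z.2).

Definition tact (N : nat) (eta : Pbar N) (z : tdual N) : tdual N :=
  ([ffun i => z.1 i + z.2 * (eta i)%:~R], z.2).

(* An element of W = bar W |x bar P is written uniquely as w t_eta;
   we encode it by the pair (w, eta). *)
Definition Wel (N : nat) : Type := ({perm 'I_N} * Pbar N)%type.
Definition Wact (N : nat) (x : Wel N) (z : tdual N) : tdual N :=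
  pact x.1 (tact x.2 z).

(* Action of the element t_eta w of W (used for X^beta). *)
Definition Xact (N : nat) (w : {perm 'I_N}) (eta : Pbar N) (z : tdual N)
  : tdual N := tact eta (pact w z).

Definition ordered_partition (N : nat) (beta : seq nat) : Prop :=
  all (fun b : nat => (0 < b)%N) beta /\ sumn beta = N.

(* i lies in the k-th block (0-based) of beta. *)
Definition in_block (beta : seq nat) (k i : nat) : bool :=
  (k < size beta)%N && (sumn (take k beta) <= i < sumn (take k.+1 beta))%N.

Definition same_block (beta : seq nat) (i j : nat) : bool :=
  [exists k : 'I_(size beta), in_block beta k i && in_block beta k j].

(* Roots.  The affine root alpha_ij + k delta (i <> j) is encoded by (i,j,k). *)
Definition posroot (N : nat) (i j : 'I_N) (k : int) : bool :=
  (i != j) && ((((i < j)%N) && (0 <= k)) || (((j < i)%N) && (0 < k))).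

Definition in_Rbeta_pos (beta : seq nat) (N : nat) (i j : 'I_N) (k : int)
  : bool := (k == 0) && (i < j)%N && same_block beta i j.

Definition pair_root (N : nat) (z : tdual N) (i j : 'I_N) (k : int) : CC :=
  z.1 i - z.1 j + k%:~R * z.2.

Definition in_tdual_beta (beta : seq nat) (N : nat) (z : tdual N) : Prop :=
  forall i j : 'I_N, val j = (val i).+1 -> same_block beta i j ->
    z.1 i - z.1 j = -1.

Definition in_tbar_beta (beta : seq nat) (N : nat) (z : {ffun 'I_N -> CC})
  : Prop :=
  forall i j : 'I_N, val j = (val i).+1 -> same_block beta i j ->
    z i - z j = -1.

Definition generic (beta : seq nat) (N : nat) (z : tdual N) : Prop :=
  forall (i j : 'I_N) (k : int), posroot i j k -> ~~ in_Rbeta_pos beta i j k ->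
    pair_root z i j k \notin [:: 1; 0; -1].

Definition generic_bar (beta : seq nat) (N : nat) (z : {ffun 'I_N -> CC})
  : Prop :=
  forall i j : 'I_N, (i < j)%N -> ~~ same_block beta i j ->
    z i - z j \notin [:: 1; 0; -1].

(* Length on bar W:  l(w) = #(R_+ \cap w^-1(R_-)).  For w in bar W,
   w(alpha_ij + k delta) = alpha_(w i, w j) + k delta, so a root with k <> 0
   keeps its sign; only k = 0 contributes, giving the finite count below. *)
Definition lenW (N : nat) (w : {perm 'I_N}) : nat :=
  #|[set p : 'I_N * 'I_N | posroot p.1 p.2 0 && ~~ posroot (w p.1) (w p.2) 0]|.

Definition Pi_beta_refl (beta : seq nat) (N : nat) : {set {perm 'I_N}} :=
  [set s | [exists i : 'I_N, exists j : 'I_N,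
             [&& val j == (val i).+1, same_block beta i j & s == tperm i j]]].

Definition Wbar_beta (beta : seq nat) (N : nat) : {set {perm 'I_N}} :=
  <<Pi_beta_refl beta N>>%g.

(* bar W^beta = { w in bar W : l(wu) >= l(w) for all u in bar W_beta }.
   The product wu (first u, then w) is the mathcomp permutation (u * w)%g. *)
Definition in_WbarBeta (beta : seq nat) (N : nat) (w : {perm 'I_N}) : Prop :=
  forall u, u \in Wbar_beta beta N -> (lenW w <= lenW (u * w)%g)%N.

Definition in_Pminus (N : nat) (eta : Pbar N) : Prop :=
  forall i j : 'I_N, (i < j)%N -> eta i - eta j <= 0.

(* e is eta_w: (e, eps_1) = 0 and (e, alpha_i) = -1 if alpha_i in
   w(bar R_+ \ bar R_(beta,+)), 0 otherwise.  alpha_i = alpha_(i,i+1) lies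
   in w(S) iff w^-1(alpha_(i,i+1)) = alpha_(w^-1 i, w^-1 (i+1)) lies in S. *)
Definition is_eta_w (beta : seq nat) (N : nat) (w : {perm 'I_N}) (e : Pbar N)
  : Prop :=
  (forall i : 'I_N, val i = 0%N -> e i = 0) /\
  (forall i j : 'I_N, val j = (val i).+1 ->
     e i - e j =
       (if ((w^-1)%g i < (w^-1)%g j)%N && ~~ same_block beta ((w^-1)%g i) ((w^-1)%g j)
        then -1 else 0)).

Definition in_Pminus_w (beta : seq nat) (N : nat) (w : {perm 'I_N})
  (eta : Pbar N) : Prop :=
  exists eta0 ew : Pbar N,
    [/\ in_Pminus eta0, is_eta_w beta w ew & eta = eta0 + ew].

Definition in_Xbeta (beta : seq nat) (N : nat) (w : {perm 'I_N}) (eta : Pbar N)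
  : Prop := in_WbarBeta beta w /\ in_Pminus_w beta w eta.

(* Main.v *)
Require Import Defs.
From mathcomp Require Import all_boot all_order all_algebra all_fingroup.
From mathcomp Require Import zify ring lra.
Import Order.TTheory GRing.Theory Num.Theory.
Local Open Scope ring_scope.
Set Implicit Arguments.
Unset Strict Implicit.

Section Blocks.
Variable beta : seq nat.

Lemma sumn_take_mono k l : (k <= l)%N -> (sumn (take k beta) <= sumn (take l beta))%N.
Proof.
move=> kl; rewrite -(subnKC kl) takeD sumn_cat; apply: leq_addr.
Qed.

Lemma in_block_uniq k l x : in_block beta k x -> in_block beta l x -> k = l.
Proof.
rewrite /in_block => /andP[_ /andP[h1 h2]] /andP[_ /andP[h3 h4]].
case: (ltngtP k l) => // kl.
  have := @sumn_take_mono _ _ kl; lia.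
have := @sumn_take_mono _ _ kl; lia.
Qed.

Lemma sb_sym x y : same_block beta x y = same_block beta y x.
Proof. by apply/existsP/existsP => -[k /andP[a b]]; exists k; rewrite a b. Qed.

Lemma sb_convex a b c d : same_block beta a b -> (a <= c)%N -> (c <= d)%N -> (d <= b)%N ->
  same_block beta c d.
Proof.
move=> /existsP[k /andP[]]; rewrite /in_block => /andP[ks /andP[h1 h2]] /andP[_ /andP[h3 h4]] ac cd db.
apply/existsP; exists k; rewrite /in_block ks /=; apply/andP; split; apply/andP; split; lia.
Qed.

Lemma sb_trans x y z : same_block beta x y -> same_block beta y z -> same_block beta x z.
Proof.
move=> /existsP[k /andP[a b]] /existsP[l /andP[c d]].
have kl : k = l by apply: ord_inj; exact: (in_block_uniq b c).
subst l; apply/existsP; exists k; by rewrite a d.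
Qed.

Definition prec (x y : nat) : bool :=
  if same_block beta x y then (x < y)%N else (y < x)%N.

Lemma prec_irr : irreflexive prec.
Proof. by move=> x; rewrite /prec ltnn; case: ifP. Qed.

Lemma prec_trans : transitive prec.
Proof.
move=> y x z; rewrite /prec.
case sxy: (same_block beta x y) => hxy; case syz: (same_block beta y z) => hyz.
- by rewrite (sb_trans sxy syz); apply: ltn_trans hxy hyz.
- case sxz: (same_block beta x z).
    by rewrite sb_sym in sxy; rewrite (sb_trans sxy sxz) in syz.
  rewrite ltnNge; apply/negP => xz.
  have : same_block beta z y by apply: (sb_convex sxy) => //; lia.
  by rewrite sb_sym syz.
- case sxz: (same_block beta x z).
    rewrite sb_sym in syz. by rewrite (sb_trans sxz syz) in sxy.
  rewrite ltnNge; apply/negP => xz.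
  have : same_block beta y x by apply: (sb_convex syz) => //; lia.
  by rewrite sb_sym sxy.
- case sxz: (same_block beta x z); last by apply: ltn_trans hyz hxy.
  rewrite sb_sym in sxz.
  have : same_block beta z y by apply: (sb_convex sxz) => //; lia.
  by rewrite sb_sym syz.
Qed.
End Blocks.

Section Core.
Variable beta : seq nat.
Variable n : nat.
Local Notation I := 'I_n.+1.

Lemma chain_diff (z : {ffun I -> CC}) : in_tbar_beta beta z ->
  forall k a, (a + k < n.+1)%N -> same_block beta a (a+k) ->
  z (inord a) - z (inord (a+k)) = - (k%:R).
Proof.
move=> hz; elim=> [|k IH] a ltk sb; first by rewrite addn0 subrr oppr0.
have e : z (inord a) - z (inord (a + k.+1)) =
  (z (inord a) - z (inord (a + k))) + (z (inord (a+k)) - z (inord (a + k.+1))) by ring.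
rewrite e IH; last by apply: (sb_convex sb) => //; lia.
2: lia.
rewrite (hz (inord (a+k)) (inord (a+k.+1))).
- by rewrite -addn1 natrD opprD.
- rewrite /= !inordK; lia.
- rewrite !inordK; [|lia|lia]; apply: (sb_convex sb); lia.
Qed.

Lemma sb_diff_ne0 (z : {ffun I -> CC}) : in_tbar_beta beta z ->
  forall a b : I, (a < b)%N -> same_block beta a b -> z a - z b != 0.
Proof.
move=> hz a b ab sb; have hb := ltn_ord b.
have eb : b = inord (a + (b - a)) by apply: val_inj; rewrite /= inordK; lia.
have ea : a = inord a by rewrite inord_val.
have sb' : same_block beta a (a + (b - a)) by rewrite subnKC // ltnW.
rewrite eb {1}ea (chain_diff hz (k := b - a) (a := a)) //.
- by rewrite oppr_eq0 pnatr_eq0; lia.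
- lia.
Qed.

Lemma coreB (z : {ffun I -> CC}) : in_tbar_beta beta z -> generic_bar beta z ->
  forall a b : I, z a = z b -> a = b.
Proof.
move=> hz hg.
suff H : forall a b : I, (a < b)%N -> z a = z b -> False.
  move=> a b e; case: (ltngtP a b) => ab.
  - by case: (H _ _ ab e).
  - by case: (H _ _ ab (esym e)).
  - exact: val_inj.
move=> a b ab e.
case sb: (same_block beta a b).
  by move: (sb_diff_ne0 hz ab sb); rewrite e subrr eqxx.
by move: (hg a b ab (negbT sb)); rewrite e subrr !inE eqxx orbT.
Qed.

Lemma coreA (z : tdual n.+1) : in_tdual_beta beta z -> generic beta z -> z.2 != 0 ->
  forall (a b : I) (m m' : int),
  z.1 a + z.2 * m%:~R = z.1 b + z.2 * m'%:~R -> a = b /\ m = m'.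
Proof.
move=> hz hg k0.
have hzb : in_tbar_beta beta z.1 by exact: hz.
suff H : forall (a b : I) (m m' : int), (a < b)%N ->
  z.1 a + z.2 * m%:~R = z.1 b + z.2 * m'%:~R -> False.
  move=> a b m m' e.
  have ab : a = b.
    case: (ltngtP a b) => ab.
    - by case: (H _ _ _ _ ab e).
    - by case: (H _ _ _ _ ab (esym e)).
    - exact: val_inj.
  split=> //; subst b; move/addrI: e => /(mulfI k0); exact: intr_inj.
move=> a b m m' ab e.
have p0 : pair_root z a b (m - m') = 0.
  rewrite /pair_root intrB.
  have -> : z.1 a = z.1 b + z.2 * m'%:~R - z.2 * m%:~R by rewrite -e; ring.
  ring.
have ne0 : forall x : CC, x = 0 -> x \notin [:: 1; 0; -1] -> False.
  by move=> x ->; rewrite !inE eqxx orbT.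
case: (lerP 0 (m - m')) => hk.
- case r: (in_Rbeta_pos beta a b (m - m')).
    move: r; rewrite /in_Rbeta_pos => /andP[/andP[/eqP k0' _] sb].
    move: p0; rewrite /pair_root k0' mulr0z mul0r addr0 => p0.
    by move: (sb_diff_ne0 hzb ab sb); rewrite p0 eqxx.
  apply: (ne0 _ p0); apply: hg; last by rewrite r.
  rewrite /posroot ab hk /= andbT; apply/eqP => ab'; by rewrite ab' ltnn in ab.
- have p1 : pair_root z b a (- (m - m')) = 0.
    by move: p0; rewrite /pair_root => p0; rewrite intrN mulNr -oppr0 -p0; ring.
  apply: (ne0 _ p1); apply: hg.
    rewrite /posroot ab oppr_gt0 hk orbT andbT; apply/eqP => ab'; by rewrite ab' ltnn in ab.
  by rewrite /in_Rbeta_pos oppr_eq0 (negbTE (ltr0_neq0 hk)).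
Qed.
End Core.

Lemma path_iota (T : Type) (r : rel T) (G : nat -> T) k : forall m,
  (forall i, (m <= i)%N -> (i < m + k)%N -> r (G i) (G i.+1)) ->
  path r (G m) (map G (iota m.+1 k)).
Proof.
elim: k => [//|k IH] m h /=.
rewrite h //; last lia.
apply: IH => i h1 h2; apply: h; lia.
Qed.

Section Xb.
Variable beta : seq nat.
Variable n : nat.
Local Notation I := 'I_n.+1.

Lemma posroot0 (i j : I) : posroot i j 0 = (i < j)%N.
Proof.
rewrite /posroot lexx ltxx andbT andbF orbF.
apply/idP/idP => [/andP[]//|h]; rewrite h andbT.
by apply: contraTneq h => ->; rewrite ltnn.
Qed.

Lemma nv (a b : I) : a <> b -> nat_of_ord a <> nat_of_ord b.
Proof. by move=> h e; apply: h; apply: val_inj. Qed.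

Lemma tperm_lt (c d : I) : val d = (val c).+1 -> forall x y : I, (x < y)%N -> (x, y) != (c, d) ->
  (tperm c d x < tperm c d y)%N.
Proof.
move=> hcd x y xy ne; rewrite /= in hcd.
case: (tpermP c d x) => [ex|ex|hx1 hx2]; case: (tpermP c d y) => [ey|ey|hy1 hy2];
  try subst x; try subst y;
  repeat match goal with H : (?a : I) <> ?b |- _ => move/nv in H end; try lia.
all: by rewrite eqxx in ne.
Qed.

Lemma lenW_desc (w : {perm I}) (c d : I) : val d = (val c).+1 -> (w d < w c)%N ->
  (lenW ((tperm c d) * w)%g < lenW w)%N.
Proof.
move=> hcd hw; rewrite /lenW.
set A := [set p | _].
set B := [set p | _].
have cdB : (c, d) \in B by rewrite inE /= !posroot0 hcd ltnSn /= -leqNgt ltnW.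
rewrite (cardsD1 (c, d) B) cdB add1n ltnS.
pose g := fun p : I * I => (tperm c d p.1, tperm c d p.2).
have ginj : injective g.
  by move=> [x1 x2] [y1 y2] [/perm_inj e1 /perm_inj e2] /=; rewrite e1 e2.
rewrite -(card_imset A ginj); apply: subset_leq_card; apply/subsetP => q /imsetP[[p1 p2] pA ->].
move: pA; rewrite !inE /= !posroot0 !permM => /andP[lt12 nw].
have pne : (p1, p2) != (c, d).
  apply/eqP => -[e1 e2]; subst p1 p2; move: nw; rewrite tpermL tpermR.
  by rewrite hw.
rewrite /g /= (tperm_lt hcd lt12 pne) nw /= ?andbT.
apply/eqP => -[e1 e2].
have : p1 = d by rewrite -(tpermK c d p1) e1 tpermL.
have : p2 = c by rewrite -(tpermK c d p2) e2 tpermR.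
move=> e3 e4; move: lt12; rewrite e3 e4 /=; rewrite /= in hcd; lia.
Qed.

Lemma chain_le (f : I -> nat) a k : (a + k < n.+1)%N ->
  (forall c, (a <= c)%N -> (c < a + k)%N -> ~~ (f (inord c.+1) < f (inord c))%N) ->
  (f (inord a) <= f (inord (a + k)))%N.
Proof.
elim: k => [|k IH] hk h; first by rewrite addn0.
apply: (leq_trans (IH _ _)); first lia.
  by move=> c h1 h2; apply: h; lia.
rewrite addnS; have := h (a + k); rewrite -leqNgt; apply; lia.
Qed.

Definition lexr (p q : int * I) : bool :=
  (p.1 < q.1) || ((p.1 == q.1) && prec beta (val p.2) (val q.2)).

Lemma lexr_irr : irreflexive lexr.
Proof. by move=> [a x]; rewrite /lexr /= ltxx prec_irr andbF. Qed.

Lemma lexr_trans : transitive lexr.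
Proof.
move=> [y1 y2] [x1 x2] [z1 z2]; rewrite /lexr /=.
case/orP=> [h1|/andP[/eqP e1 p1]]; case/orP=> [h2|/andP[/eqP e2 p2]].
- by rewrite (lt_trans h1 h2).
- by rewrite -e2 h1.
- by rewrite e1 h2.
- by rewrite e1 e2 eqxx (prec_trans p1 p2) orbT.
Qed.

Lemma L2 (w : {perm I}) (eta : Pbar n.+1) : in_Xbeta beta w eta ->
  forall i j : I, val j = (val i).+1 -> lexr (eta i, (w^-1)%g i) (eta j, (w^-1)%g j).
Proof.
move=> [hW [e0 [ew [hP [_ hew] ->]]]] i j hij.
have ij : (i < j)%N by rewrite hij.
have := hew i j hij; have := hP i j ij.
rewrite /lexr /= !ffunE.
set si := (w^-1)%g i; set sj := (w^-1)%g j.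
have sij : si != sj by apply/eqP => /perm_inj e; move: ij; rewrite e ltnn.
have wsi : w si = i by rewrite /si permKV.
have wsj : w sj = j by rewrite /sj permKV.
case c: ((si < sj)%N && ~~ same_block beta si sj);
  set a1 := e0 i; set a2 := e0 j; set b1 := ew i; set b2 := ew j; move=> h1 h2.
  apply/orP; left; lia.
case: (ltgtP (a1 + b1) (a2 + b2)) => // [lt|eq]; first lia.
rewrite ?eqxx /= /prec.
case sb: (same_block beta si sj).
  rewrite ltnNge; apply/negP => le.
  have lt : (sj < si)%N by rewrite ltn_neqAle le andbT; apply: contra sij => /eqP/val_inj ->.
  have hc : forall c, (sj <= c)%N -> (c < sj + (si - sj))%N ->
      ~~ (w (inord c.+1) < w (inord c))%N.
    move=> c0 h3 h4; apply/negP => lt'.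
    have hs := ltn_ord si.
    have sb' : same_block beta (inord c0 : I) (inord c0.+1 : I).
      rewrite !inordK; [|lia|lia]; rewrite sb_sym in sb; apply: (sb_convex sb); lia.
    have mem : tperm (inord c0 : I) (inord c0.+1) \in Wbar_beta beta n.+1.
      apply: mem_gen; rewrite inE; apply/existsP; exists (inord c0); apply/existsP; exists (inord c0.+1).
      by rewrite sb' eqxx /= !inordK ?eqxx //; lia.
    have := hW _ mem; rewrite leqNgt (lenW_desc _ lt') //.
    by rewrite /= !inordK //; lia.
  have e : (sj + (si - sj) = si)%N by rewrite subnKC // ltnW.
  have hlt : (sj + (si - sj) < n.+1)%N by rewrite e.
  have key := @chain_le (fun x => val (w x)) sj (si - sj) hlt hc.
  by move: key; rewrite e !inord_val wsi wsj leqNgt ij.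
move: c; rewrite sb andbT => /negbT; rewrite -leqNgt leq_eqVlt => /orP[/eqP e|//].
by move: sij; rewrite (val_inj e) eqxx.
Qed.

Lemma sorted_X (w : {perm I}) (eta : Pbar n.+1) : in_Xbeta beta w eta ->
  sorted lexr [seq (eta i, (w^-1)%g i) | i <- enum I].
Proof.
move=> hX.
have -> : [seq (eta i, (w^-1)%g i) | i <- enum I] =
    [seq (eta (inord k), (w^-1)%g (inord k)) | k <- iota 0 n.+1].
  by rewrite -val_enum_ord -map_comp; apply: eq_map => i /=; rewrite inord_val.
rewrite /=; apply: (path_iota (G := fun k => (eta (inord k), (w^-1)%g (inord k)))) => i _ h.
apply: L2 => //; rewrite /= !inordK //; lia.
Qed.
End Xb.

Theorem proposition2p21 (N : nat) (hN : (2 <= N)%N) (beta : seq nat)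
  (hbeta : ordered_partition N beta) :
  (forall zeta : tdual N,
     in_tdual_beta beta zeta -> generic beta zeta -> zeta.2 != 0 ->
     (* (i) *)
     (forall x y : Wel N, Wact x zeta = Wact y zeta -> x = y) /\
     (* (ii) *)
     (forall (w w' : {perm 'I_N}) (eta eta' : Pbar N),
        in_Xbeta beta w eta -> in_Xbeta beta w' eta' ->
        (exists u : {perm 'I_N}, pact u (Xact w eta zeta) = Xact w' eta' zeta) ->
        w = w' /\ eta = eta')) /\
  (forall zb : {ffun 'I_N -> CC},
     in_tbar_beta beta zb -> generic_bar beta zb ->
     forall w w' : {perm 'I_N}, pactb w zb = pactb w' zb -> w = w').
Proof.
case: N hN hbeta => [//|n] _ _.
split.
  move=> z hz hg k0; split.
    move=> [w eta] [w' eta'] /(congr1 fst) /= E.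
    have H : forall j, (w^-1)%g j = (w'^-1)%g j /\ eta ((w^-1)%g j) = eta' ((w'^-1)%g j).
      move=> j; have := congr1 (fun f : {ffun 'I_n.+1 -> CC} => f j) E; rewrite /= !ffunE /=.
      move=> e; exact: (coreA hz hg k0 e).
    have ww : w = w'.
      apply: invg_inj; apply/permP => j; exact: (H j).1.
    subst w'; congr pair; apply/ffunP => k.
    have := (H (w k)).2; by rewrite permK.
  move=> w w' eta eta' hX hX' [u E].
  have H : forall j, (w^-1)%g ((u^-1)%g j) = (w'^-1)%g j /\ eta ((u^-1)%g j) = eta' j.
    move=> j; have := congr1 (fun f : tdual n.+1 => f.1 j) E; rewrite /= !ffunE /=.
    move=> e; exact: (coreA hz hg k0 e).
  have S1 := sorted_X hX; have S2 := sorted_X hX'.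
  have eqs : [seq (eta i, (w^-1)%g i) | i <- enum 'I_n.+1] =i
             [seq (eta' i, (w'^-1)%g i) | i <- enum 'I_n.+1].
    move=> x; apply/mapP/mapP => -[i _ ->].
      exists (u i); first by rewrite mem_enum.
      by have [<- <-] := H (u i); rewrite permK.
    exists ((u^-1)%g i); first by rewrite mem_enum.
    by have [<- <-] := H i.
  have := irr_sorted_eq (@lexr_trans beta n) (@lexr_irr beta n) S1 S2 eqs.
  move/eq_in_map => H2.
  have H3 : forall i, eta i = eta' i /\ (w^-1)%g i = (w'^-1)%g i.
    move=> i; have := H2 i; rewrite mem_enum => /(_ isT) [-> ->]; done.
  split.
    apply: invg_inj; apply/permP => j; exact: (H3 j).2.
  apply/ffunP => j; exact: (H3 j).1.
move=> zb hz hg w w' E.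
apply: invg_inj; apply/permP => j.
have := congr1 (fun f : {ffun 'I_n.+1 -> CC} => f j) E; rewrite /pactb !ffunE.
move=> e; exact: (coreB hz hg e).
Qed.
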